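(* Let $r\in\mathbb N_0$ and let $x_0,\dots,x_r\in\mathbb R$ satisfy: (i) $\sum_{i=0}^rx_i=0$; (ii) $x_{r-i}=x_i$ for all $0\le i\le r$; (iii) there is an integer $n$ such that $x_i\ge0$ for $0\le i\le n$ and $x_i<0$ for $n<i\le\lfloor r/2\rfloor$. Let $f_0,\dots,f_r\in\mathbb R$ satisfy $0\le f_1-f_0\le f_2-f_1\le\dots\le f_r-f_{r-1}$. Then $\sum_{i=0}^rf_ix_i\ge0$. *)

(* Defs.v *)
From mathcomp Require Import all_boot all_order all_algebra.

(* Main.v *)
Require Import Defs.
From mathcomp Require Import all_boot all_order all_algebra.
From mathcomp Require Import ring lra zify.
Import Order.TTheory GRing.Theory Num.Theory.
Local Open Scope ring_scope.

Section Aux.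
Variable R : realFieldType.
Implicit Types x f : nat -> R.

Definition Sx x k := \sum_(0 <= i < k) x i.

Lemma SxS x k : Sx x k.+1 = Sx x k + x k.
Proof. by rewrite /Sx big_nat_recr. Qed.

Lemma abel x f k : \sum_(0 <= i < k) f i * x i =
  f k * Sx x k - \sum_(0 <= i < k) Sx x i.+1 * (f i.+1 - f i).
Proof.
elim: k => [|k IH]; first by rewrite /Sx !big_geq // mulr0 subr0.
rewrite !big_nat_recr //= IH SxS; ring.
Qed.

Lemma antisym x r : \sum_(0 <= i < r.+1) x i = 0 ->
  (forall i : nat, (i <= r)%N -> x (r - i)%N = x i) ->
  forall j, (j <= r.+1)%N -> Sx x (r.+1 - j) = - Sx x j.
Proof.
move=> Hs Hsym j Hj.
have E : Sx x r.+1 = Sx x (r.+1 - j) + \sum_(r.+1 - j <= i < r.+1) x i.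
  by rewrite /Sx (big_cat_nat _ (n := (r.+1 - j)%N)) //= leq_subr.
have E2 : \sum_(r.+1 - j <= i < r.+1) x i = Sx x j.
  rewrite -{1}[(r.+1 - j)%N]add0n big_addn.
  have -> : (r.+1 - (r.+1 - j) = j)%N by lia.
  rewrite big_nat_rev /Sx; apply: eq_big_nat => i /andP [_ Hi] /=.
  have -> : (j - i.+1 + (r.+1 - j) = r - i)%N by lia.
  apply: Hsym; lia.
move: E; rewrite E2 /Sx Hs => E.
lra.
Qed.

End Aux.
Arguments Sx {R} x k.
Arguments SxS {R}.
Arguments abel {R}.

Theorem lemma10 (R : realFieldType) (r : nat) (x f : nat -> R) (n : int) :
  \sum_(0 <= i < r.+1) x i = 0 ->
  (forall i : nat, (i <= r)%N -> x (r - i)%N = x i) ->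
  (forall i : nat, (i <= r)%N -> (i%:Z <= n) -> 0 <= x i) ->
  (forall i : nat, (n < i%:Z) -> (i <= r./2)%N -> x i < 0) ->
  ((1 <= r)%N -> 0 <= f 1%N - f 0%N) ->
  (forall i : nat, (1 <= i)%N -> (i.+1 <= r)%N -> f i - f i.-1 <= f i.+1 - f i) ->
  0 <= \sum_(0 <= i < r.+1) f i * x i.
Proof.
move=> Hs Hsym Hpos Hneg _ Hconv.
have AS := @antisym R x r Hs Hsym.
have Hh := odd_double_half r.
set h := r./2 in Hneg Hh.
have Sr : Sx x r.+1 = 0 by rewrite /Sx Hs.
pose D i := f i.+1 - f i.
have Dmono : forall k i, (i + k < r)%N -> D i <= D (i + k)%N.
  elim=> [|k IH] i Hi; first by rewrite addn0.
  apply: le_trans (IH i _) _; first lia.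
  have := Hconv (i + k).+1 erefl; rewrite addnS /D /=; apply; lia.
have Dle : forall i j, (i <= j)%N -> (j < r)%N -> D i <= D j.
  by move=> i j Hij Hj; rewrite -(subnKC Hij); apply: Dmono; lia.
have Spos : forall j, (j.*2 <= r.+1)%N -> 0 <= Sx x j.
  move=> j Hj.
  case: (boolP (j%:Z <= n + 1)) => Hjn.
    rewrite /Sx big_nat_cond; apply: sumr_ge0 => i /andP [/andP [_ Hi] _]; apply: Hpos; lia.
  pose m := (r - h)%N.
  have Sm : 0 <= Sx x m.
    have := AS m ltac:(lia).
    case: (boolP (odd r)) => Ho.
      have -> : (r.+1 - m = m)%N by rewrite /m; lia.
      move=> E; have : Sx x m = 0 by lra. by move->.
    have -> : (r.+1 - m = m.+1)%N by rewrite /m; lia.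
    rewrite SxS => E.
    have : x m < 0 by apply: Hneg; rewrite /m; lia.
    lra.
  have -> : Sx x j = Sx x m - \sum_(j <= i < m) x i.
    rewrite /Sx (big_cat_nat _ (n := j) (p := m)) /=; [ring | done | rewrite /m; lia].
  rewrite subr_ge0; apply: le_trans Sm; rewrite -oppr_ge0 -sumrN.
  rewrite big_nat_cond; apply: sumr_ge0 => i /andP [/andP [Hi1 Hi2] _]; rewrite oppr_ge0; apply/ltW/Hneg; rewrite /m in Hi2; lia.
rewrite abel big_nat_recr //= Sr mul0r mulr0 sub0r addr0 oppr_ge0.
set T := \sum_(0 <= i < r) _.
have T2 : T = - \sum_(0 <= i < r) Sx x i.+1 * D (r - i.+1)%N.
  rewrite /T big_nat_rev -sumrN; apply: eq_big_nat => i /andP [_ Hi] /=.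
  rewrite add0n.
  have -> : (r - i.+1).+1 = (r.+1 - i.+1)%N by lia.
  rewrite AS; last lia.
  by rewrite mulNr /D; have -> : (r.+1 - i.+1 = (r - i.+1).+1)%N by lia.
have : T + T <= 0.
  rewrite {2}T2 -sumrB; rewrite big_nat_cond; apply: sumr_le0 => i /andP [/andP [_ Hi] _].
  rewrite -mulrBr.
  case: (leqP (i.+1).*2 r.+1) => Hc.
    apply: mulr_ge0_le0; first exact: Spos.
    rewrite subr_le0; apply: Dle; lia.
  have -> : Sx x i.+1 = - Sx x (r - i)%N.
    have := AS (r - i)%N ltac:(lia).
    have -> : (r.+1 - (r - i) = i.+1)%N by lia.
    move=> E; lra.
  rewrite mulNr oppr_le0; apply: mulr_ge0; first by apply: Spos; lia.
  rewrite subr_ge0; apply: Dle; lia.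
lra.
Qed.
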